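(* Let $p\geq r\geq2$ and let $A$ be a symmetric nonnegative $r$-matrix of order $n$. If $\mathbf{x}=(x_1,\ldots,x_n)$ is a positive vector with $|\mathbf{x}|_p=1$ satisfying \[ \lambda x_k^{p-1}=\frac1r\frac{\partial P_A(\mathbf{x})}{\partial x_k},\qquad k=1,\ldots,n, \] for some real $\lambda$, then $\lambda=\lambda^{(p)}(A)$.
   Context: A cubical $r$-matrix of order $n$ is a function $A$ on $[n]^r$ with entries $a_{i_1,\ldots,i_r}$; symmetric means invariant under permutations of indices. $P_A(\mathbf{x})=\sum a_{i_1,\ldots,i_r}x_{i_1}\cdots x_{i_r}$ and $\lambda^{(p)}(A)=\max\{P_A(\mathbf{x}):\mathbf{x}\in\mathbb{R}^n,\ |\mathbf{x}|_p=1\}$. *)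

(* Defs.v *)
From HB Require Import structures.
From mathcomp Require Import all_boot all_order all_algebra all_fingroup.
From mathcomp Require Import all_classical all_reals all_analysis.
Set Implicit Arguments. Unset Strict Implicit. Unset Printing Implicit Defensive.
Import Order.TTheory GRing.Theory Num.Theory.
Local Open Scope ring_scope.

Definition rmatrix (R : realType) (r n : nat) := {ffun 'I_r -> 'I_n} -> R.

Definition rmx_symmetric (R : realType) (r n : nat) (A : rmatrix R r n) : Prop :=
  forall (s : 'S_r) (i : {ffun 'I_r -> 'I_n}), A [ffun j => i (s j)] = A i.

Definition rmx_nonneg (R : realType) (r n : nat) (A : rmatrix R r n) : Prop :=
  forall i, 0 <= A i.

Definition PA (R : realType) (r n : nat) (A : rmatrix R r n) (x : 'I_n -> R) : R :=
  \sum_(i : {ffun 'I_r -> 'I_n}) A i * \prod_(j < r) x (i j).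

Definition pnorm (R : realType) (n : nat) (p : R) (x : 'I_n -> R) : R :=
  powR (\sum_(i < n) powR `|x i| p) p^-1.

Definition partial (R : realType) (n : nat) (f : ('I_n -> R) -> R) (k : 'I_n)
  (x : 'I_n -> R) : R :=
  derive1 (fun t : R => f (fun i => x i + (if i == k then t else 0))) 0.

Definition is_lambda_p (R : realType) (r n : nat) (p : R) (A : rmatrix R r n)
  (lam : R) : Prop :=
  (exists y : 'I_n -> R, pnorm p y = 1 /\ PA A y = lam) /\
  (forall y : 'I_n -> R, pnorm p y = 1 -> PA A y <= lam).

(* Main.v *)
Require Import Defs.
From HB Require Import structures.
From mathcomp Require Import all_boot all_order all_algebra all_fingroup.
From mathcomp Require Import all_classical all_reals all_analysis.
From mathcomp Require Import ring.
Import Order.TTheory GRing.Theory Num.Theory.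
Set Implicit Arguments. Unset Strict Implicit. Unset Printing Implicit Defensive.
Local Open Scope ring_scope.

Lemma deriv_prod_ord (R : comNzRingType) n (F : 'I_n -> {poly R}) :
  (\prod_(j < n) F j)^`() = \sum_(j < n) (F j)^`() * \prod_(l < n | l != j) F l.
Proof.
elim: n F => [|n IH] F.
  by rewrite !big_ord0 -polyC1 derivC.
rewrite big_ord_recr /= derivM IH [RHS]big_ord_recr /=.
congr (_ + _).
- rewrite mulr_suml; apply: eq_bigr => j _; rewrite -mulrA; congr (_ * _).
  rewrite [RHS]big_mkcond big_ord_recr /=.
  have -> : (ord_max != widen_ord (leqnSn n) j) by rewrite -val_eqE /= gtn_eqF.
  by rewrite -big_mkcond.
- rewrite mulrC; congr (_ * _).
  rewrite [RHS]big_mkcond big_ord_recr /= eqxx mulr1.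
  apply: eq_bigr => i _.
  by rewrite -val_eqE /= ltn_eqF.
Qed.

Lemma AGM_r (R : realFieldType) r (t : 'I_r -> R) : (0 < r)%N -> (forall j, 0 <= t j) ->
  \prod_(j < r) t j <= r%:R^-1 * \sum_(j < r) t j ^+ r.
Proof.
move=> r0 t0.
have := leif_AGM (A := predT) (E := fun j => t j ^+ r) (fun j _ => exprn_ge0 r (t0 j)).
move=> [H _].
rewrite cardT /= size_enum_ord prodrXl in H.
rewrite mulrC -(ler_pXn2r r0) ?nnegrE //.
- by apply: prodr_ge0.
- by apply: mulr_ge0; [apply: sumr_ge0 => j _; apply: exprn_ge0|rewrite invr_ge0].
Qed.

Definition Gk (R : realType) (r n : nat) (A : rmatrix R r n) (x : 'I_n -> R) (k : 'I_n) : R :=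
  \sum_i A i * \sum_(j < r) (if i j == k then 1 else 0) * \prod_(l < r | l != j) x (i l).

Lemma partial_PA (R : realType) (r n : nat) (A : rmatrix R r n) (x : 'I_n -> R) k :
  partial (PA A) k x = Gk A x k.
Proof.
rewrite /partial.
set q : {poly R} := \sum_i A i *: \prod_(j<r) ((x (i j))%:P + (if i j == k then 'X else 0)).
have -> : (fun t => PA A (fun i0 => x i0 + (if i0 == k then t else 0))) = horner q.
  apply/funext => t; rewrite /PA /q horner_sum; apply: eq_bigr => i _.
  rewrite hornerZ horner_prod; congr (_ * _); apply: eq_bigr => j _.
  by case: ifP => _; rewrite !hornerE.
rewrite -derivE /q (big_morph (@deriv R) (@derivD R) (@deriv0 R)) horner_sum; apply: eq_bigr => i _.

rewrite derivZ hornerZ deriv_prod_ord horner_sum; congr (_ * _); apply: eq_bigr => j _.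
rewrite hornerM horner_prod; congr (_ * _).
  by case: ifP => _; rewrite derivD derivC ?derivX ?deriv0 !hornerE.
by apply: eq_bigr => l _; case: ifP => _; rewrite !hornerE.
Qed.

Lemma young_r (R : realType) (r : nat) (p a b : R) : (0 < r)%N -> r%:R <= p ->
  0 <= a -> 0 < b ->
  a ^+ r * powR b (p - r%:R) <= r%:R / p * powR a p + (p - r%:R) / p * powR b p.
Proof.
move=> r0 rp a0 b0.
have rR : 0 < (r%:R : R) by rewrite ltr0n.
have p0 : 0 < p by apply: lt_le_trans rp.
rewrite le_eqVlt in rp; case/orP: rp => [/eqP rp|rp].
  rewrite -rp subrr powRr0 mulr1 !mul0r addr0 divff ?gt_eqF // mul1r.
  by rewrite powR_mulrn.
have pr0 : 0 < p - r%:R by rewrite subr_gt0.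
have := @conjugate_powR R (a ^+ r) (powR b (p - r%:R)) (p / r%:R) (p / (p - r%:R))
  (exprn_ge0 _ a0) (powR_ge0 _ _) (divr_gt0 p0 rR) (divr_gt0 p0 pr0).
rewrite !invf_div.
have -> : r%:R / p + (p - r%:R) / p = 1 by field; rewrite gt_eqF.
move=> /(_ erefl).
rewrite -powR_mulrn // -!powRrM.
have -> : r%:R * (p / r%:R) = p by field; rewrite gt_eqF.
have -> : (p - r%:R) * (p / (p - r%:R)) = p by field; rewrite gt_eqF.
move=> H; apply: (le_trans H); apply: lerD; rewrite le_eqVlt; apply/orP; left; apply/eqP; field.
  by rewrite gt_eqF.
by rewrite gt_eqF.
Qed.

Lemma sum_wG (R : realType) (r n : nat) (A : rmatrix R r n) (x w : 'I_n -> R) :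
  \sum_k (w k * x k) * Gk A x k = \sum_i A i * \sum_(j < r) w (i j) * \prod_(l < r) x (i l).
Proof.
rewrite /Gk.
under eq_bigr do rewrite mulr_sumr.
rewrite exchange_big /=; apply: eq_bigr => i _.
under eq_bigr do rewrite mulrCA mulr_sumr.
rewrite -mulr_sumr; congr (_ * _).
rewrite exchange_big; apply: eq_bigr => j _ /=.
rewrite [LHS](bigD1 (i j)) //= eqxx [X in _ + X]big1 => [|k /negbTE kn]; last first.
  by rewrite eq_sym kn mul0r mulr0.
rewrite addr0 mul1r -mulrA; congr (_ * _).
by rewrite [RHS](bigD1 j).
Qed.

Theorem proposition13 (R : realType) (r n : nat) (p : R)
  (A : rmatrix R r n) (x : 'I_n -> R) (lam : R) :
  (2 <= r)%N -> r%:R <= p ->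
  rmx_symmetric A -> rmx_nonneg A ->
  (forall k, 0 < x k) -> pnorm p x = 1 ->
  (forall k : 'I_n, lam * powR (x k) (p - 1) = r%:R^-1 * partial (PA A) k x) ->
  is_lambda_p p A lam.
Proof.
move=> r2 rp _ Anng xpos px H.
have r0 : (0 < r)%N by apply: leq_trans r2.
have rR : 0 < (r%:R : R) by rewrite ltr0n.
have rR0 : (r%:R : R) != 0 by rewrite gt_eqF.
have p0 : 0 < p by apply: lt_le_trans rp.
have Hsum : forall z : 'I_n -> R, pnorm p z = 1 -> \sum_k powR `|z k| p = 1.
  move=> z; rewrite /pnorm => h.
  have S0 : 0 <= \sum_k powR `|z k| p by apply: sumr_ge0 => k _; apply: powR_ge0.
  by rewrite -(powRr1 S0) -(mulVf (lt0r_neq0 p0)) powRrM h powR1 /= mulVf // lt0r_neq0.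
have Sx : \sum_k powR (x k) p = 1.
  rewrite -(Hsum x px); apply: eq_bigr => k _; by rewrite gtr0_norm.
have HG : forall k, Gk A x k = r%:R * (lam * powR (x k) (p - 1)).
  by move=> k; rewrite H -partial_PA mulrA divff ?mul1r.
have xp : forall k, x k * powR (x k) (p - 1) = powR (x k) p.
  move=> k; rewrite -{1}(powRr1 (ltW (xpos k))) -powRD; last first.
    by rewrite (gt_eqF (xpos k)) implybT.
  by rewrite addrC subrK.
have PAx : PA A x = lam.
  have E := sum_wG A x (fun _ => 1).
  have L : \sum_k (1 * x k) * Gk A x k = r%:R * lam.
    transitivity (r%:R * lam * \sum_k powR (x k) p); last by rewrite Sx mulr1.
    rewrite mulr_sumr; apply: eq_bigr => k _; rewrite HG mul1r -xp; ring.
  have Rr : \sum_i A i * \sum_(j < r) 1 * \prod_(l < r) x (i l) = r%:R * PA A x.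
    rewrite /PA mulr_sumr; apply: eq_bigr => i _.
    under eq_bigr do rewrite mul1r.
    rewrite sumr_const card_ord -mulr_natl; ring.
  by apply: (mulfI rR0); rewrite -Rr -E L.
have lam0 : 0 <= lam.
  rewrite -PAx; apply: sumr_ge0 => i _; apply: mulr_ge0 => //.
  by apply: prodr_ge0 => j _; apply: ltW.
split; first by exists x.
move=> y py.
pose u k := `|y k|.
pose t k := u k / x k.
have S1 := Hsum y py.
have t0 : forall k, 0 <= t k by move=> k; apply: divr_ge0; [exact: normr_ge0|exact: ltW].
apply: (@le_trans _ _ (\sum_i A i * \prod_(j < r) u (i j))).
  apply: ler_sum => i _; rewrite /u -normr_prod.
  by apply: ler_wpM2l => //; apply: ler_norm.
apply: (@le_trans _ _ (\sum_i A i * (r%:R^-1 * \sum_(j < r) t (i j) ^+ r * \prod_(l < r) x (i l)))).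
  apply: ler_sum => i _; apply: ler_wpM2l => //.
  have -> : \prod_(j < r) u (i j) = \prod_(j < r) x (i j) * \prod_(j < r) t (i j).
    rewrite -big_split; apply: eq_bigr => j _; rewrite /t [RHS]mulrC divfK //.
    by rewrite gt_eqF.
  rewrite -mulr_suml [leRHS]mulrA [leRHS]mulrC.
  apply: ler_wpM2l; first by apply: prodr_ge0 => j _; apply: ltW.
  by apply: AGM_r.
under eq_bigr do rewrite mulrCA.
rewrite -mulr_sumr -(sum_wG A x (fun k => t k ^+ r)) mulr_sumr.
apply: (@le_trans _ _ (lam * \sum_k (u k ^+ r * powR (x k) (p - r%:R)))); last first.
  rewrite -[leRHS]mulr1; apply: ler_wpM2l => //.
  apply: (@le_trans _ _ (\sum_k (r%:R / p * powR (u k) p + (p - r%:R) / p * powR (x k) p))).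
    apply: ler_sum => k _; apply: young_r => //; exact: normr_ge0.
  rewrite big_split /= -!mulr_sumr Sx S1.
  rewrite le_eqVlt; apply/orP; left; apply/eqP; field; by rewrite gt_eqF.
rewrite le_eqVlt; apply/orP; left; apply/eqP.
rewrite mulr_sumr; apply: eq_bigr => k _.
rewrite HG /t expr_div_n.
have xk := xpos k.
rewrite (@powRB _ (x k) p r%:R); last by rewrite (gt_eqF xk) implybT.
rewrite powR_mulrn; last exact: ltW.
rewrite -(xp k).
field.
by rewrite gt_eqF // exprn_gt0.
Qed.
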